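(* Under a general RLCM with $J\times K$ binary $Q$-matrix $Q$, if $(Q,\boldsymbol\Theta,\boldsymbol p)$ are jointly generically identifiable then $Q$ is generically complete, i.e. $Q$ has $K$ rows which, after a permutation of these rows and of the columns, form a $K\times K$ matrix all of whose diagonal entries equal $1$.
   Context: A $Q$-matrix is a $J\times K$ binary matrix with rows $\boldsymbol q_j$. For $\boldsymbol\alpha,\boldsymbol q\in\{0,1\}^K$, $\boldsymbol\alpha\succeq\boldsymbol q$ means $\alpha_k\ge q_k$ for all $k$; $\odot$ is the elementwise product. RLCM: latent $\boldsymbol A\in\{0,1\}^K$ with $P(\boldsymbol A=\boldsymbol\alpha)=p_{\boldsymbol\alpha}>0$, $\sum p_{\boldsymbol\alpha}=1$; given $\boldsymbol A=\boldsymbol\alpha$, responses $R_1,\dots,R_J\in\{0,1\}$ independent with $P(R_j=1\mid\boldsymbol\alpha)=\theta_{j,\boldsymbol\alpha}$, $\boldsymbol\Theta=(\theta_{j,\boldsymbol\alpha})$; constraints: $\theta_{j,\boldsymbol\alpha}=\theta_{j,\boldsymbol\alpha'}$ if $\boldsymbol\alpha\odot\boldsymbol q_j=\boldsymbol\alpha'\odot\boldsymbol q_j$, and $\theta_{j,\boldsymbol\alpha}>\theta_{j,\boldsymbol\alpha'}$ if $\boldsymbol\alpha\succeq\boldsymbol q_j$, $\boldsymbol\alpha'\not\succeq\boldsymbol q_j$. In a general RLCM (e.g. GDINA: $\theta_{j,\boldsymbol\alpha}=\sum_{S\subseteq\{k:q_{j,k}=1\}}\beta_{j,S}\prod_{k\in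 S}\alpha_k$), apart from these constraints the item parameters are free (all main and interaction effects of required attributes); the parameter space is full-dimensional in $\mathbb R^m$. $(\bar Q,\bar{\boldsymbol\Theta},\bar{\boldsymbol p})\sim(Q,\boldsymbol\Theta,\boldsymbol p)$ means $\bar Q$ equals $Q$ up to column permutation and parameters coincide (after relabeling attributes). Joint generic identifiability: the set of $(\boldsymbol\Theta,\boldsymbol p)$ for which some $(\bar Q,\bar{\boldsymbol\Theta},\bar{\boldsymbol p})\not\sim(Q,\boldsymbol\Theta,\boldsymbol p)$ ($\bar Q$ any $J\times K$ binary matrix, valid parameters) gives the same distribution of $\boldsymbol R$ has Lebesgue measure zero in the parameter space. *)

(* Defs.v *)
From HB Require Import structures.
From mathcomp Require Import all_boot all_order all_algebra all_fingroup.
From mathcomp Require Import reals.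
Set Implicit Arguments. Unset Strict Implicit. Unset Printing Implicit Defensive.
Import Order.TTheory GRing.Theory Num.Theory.
Local Open Scope ring_scope.

Definition att (K : nat) := {ffun 'I_K -> bool}.

Definition att0 (K : nat) : att K := [ffun => false].

Definition succeq K (a q : att K) : bool := [forall k, q k ==> a k].

Definition odot K (a q : att K) : att K := [ffun k => a k && q k].

Definition qrow J K (Q : 'M[bool]_(J, K)) (j : 'I_J) : att K := [ffun k => Q j k].

(* (Theta, p) are valid RLCM parameters for the Q-matrix Q (general RLCM:
   no constraints beyond the RLCM ones). *)
Definition valid_params (R : realType) J K (Q : 'M[bool]_(J, K))
    (theta : 'I_J -> att K -> R) (p : att K -> R) : Prop :=
  [/\ (forall a, 0 < p a),
      \sum_(a : att K) p a = 1,
      (forall j a, 0 <= theta j a <= 1),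
      (forall j a a', odot a (qrow Q j) = odot a' (qrow Q j) ->
                      theta j a = theta j a') &
      (forall j a a', succeq a (qrow Q j) -> ~~ succeq a' (qrow Q j) ->
                      theta j a' < theta j a)].

Definition resp_dist (R : realType) J K (theta : 'I_J -> att K -> R)
    (p : att K -> R) (r : {ffun 'I_J -> bool}) : R :=
  \sum_(a : att K) p a *
     \prod_(j < J) (if r j then theta j a else 1 - theta j a).

Definition model_equiv (R : realType) J K (Q Qb : 'M[bool]_(J, K))
    (theta thetab : 'I_J -> att K -> R) (p pb : att K -> R) : Prop :=
  exists s : {perm 'I_K},
    [/\ (forall j k, Qb j k = Q j (s k)),
        (forall a : att K, pb [ffun k => a (s k)] = p a) &
        (forall j (a : att K), thetab j [ffun k => a (s k)] = theta j a)].

(* Free coordinates of the (full-dimensional) parameter space of a general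
   RLCM: theta_{j,alpha} for alpha \preceq q_j (i.e. one value for each
   pattern alpha \odot q_j), and p_alpha for alpha <> 0
   (p_0 = 1 - sum of the others). *)
Definition coord (J K : nat) : finType := (('I_J * att K) + att K)%type.

Definition coord_dom J K (Q : 'M[bool]_(J, K)) (i : coord J K) : bool :=
  match i with
  | inl (j, a) => succeq (qrow Q j) a
  | inr a => a != att0 K
  end.

Definition theta_of (R : realType) J K (Q : 'M[bool]_(J, K))
    (c : coord J K -> R) : 'I_J -> att K -> R :=
  fun j a => c (inl (j, odot a (qrow Q j))).

Definition p_of (R : realType) J K (c : coord J K -> R) : att K -> R :=
  fun a => if a == att0 K then 1 - \sum_(b : att K | b != att0 K) c (inr b)
           else c (inr a).

(* Lebesgue-null subset of R^dom (coordinates outside dom are ignored):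
   for every eps > 0 it is covered by countably many boxes of total
   volume at most eps. *)
Definition lebesgue_null (R : realType) (T : finType) (dom : pred T)
    (N : (T -> R) -> Prop) : Prop :=
  forall eps : R, 0 < eps ->
    exists (lo hi : nat -> T -> R),
      [/\ (forall n i, lo n i <= hi n i),
          (forall m, \sum_(n < m) \prod_(i | dom i) (hi n i - lo n i) <= eps) &
          (forall c, N c -> exists n, forall i, dom i -> lo n i <= c i <= hi n i)].

Definition jointly_generically_identifiable (R : realType) J K
    (Q : 'M[bool]_(J, K)) : Prop :=
  lebesgue_null (coord_dom Q)
    (fun c : coord J K -> R =>
       valid_params Q (theta_of Q c) (p_of c) /\
       exists (Qb : 'M[bool]_(J, K)) (thetab : 'I_J -> att K -> R)
              (pb : att K -> R),
         [/\ valid_params Qb thetab pb,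
             (forall r, resp_dist thetab pb r = resp_dist (theta_of Q c) (p_of c) r) &
             ~ model_equiv Q Qb (theta_of Q c) thetab (p_of c) pb]).

Definition generically_complete J K (Q : 'M[bool]_(J, K)) : Prop :=
  exists f : 'I_K -> 'I_J, injective f /\
  exists s t : {perm 'I_K}, forall i : 'I_K, Q (f (t i)) (s i).

(* Main.v *)
Require Import Defs.
From HB Require Import structures.
From mathcomp Require Import all_boot all_order all_algebra all_fingroup.
From mathcomp Require Import reals.
From mathcomp Require Import zify lra ring.
Set Implicit Arguments. Unset Strict Implicit. Unset Printing Implicit Defensive.
Import Order.TTheory GRing.Theory Num.Theory.
Section Hall.
Variables (C W : finType) (q : W -> C -> bool) (w0 : W).

Definition nbr (Rs : {set W}) (S : {set C}) := [set j in Rs | [exists k in S, q j k]].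

Definition hallc (Cs : {set C}) (Rs : {set W}) :=
  forall S : {set C}, S \subset Cs -> #|S| <= #|nbr Rs S|.

Definition matching (Cs : {set C}) (Rs : {set W}) :=
  exists g : C -> W, [/\ {in Cs &, injective g},
     (forall k, k \in Cs -> g k \in Rs) & (forall k, k \in Cs -> q (g k) k)].

Lemma nbrS Rs S : nbr Rs S \subset Rs.
Proof. by apply/subsetP => j; rewrite inE => /andP []. Qed.

Lemma hall_ind n : forall (Cs : {set C}) (Rs : {set W}), #|Cs| <= n -> hallc Cs Rs -> matching Cs Rs.
Proof.
elim: n => [|n IH] Cs Rs.
  rewrite leqn0 cards_eq0 => /eqP -> _.
  by exists (fun _ => w0); split => [k|k|k]; rewrite inE.
move=> Csn HC.
case: (boolP [exists S : {set C}, [&& S \subset Cs, S != set0, S != Cs & #|nbr Rs S| <= #|S|]]).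
- case/existsP => S /and4P [SCs S0 SCs' NS].
  have ltS : #|S| < #|Cs| by rewrite proper_card // properEneq SCs' SCs.
  have ltS2 : #|Cs :\: S| < #|Cs|.
    rewrite cardsDS // ltn_subrL card_gt0 S0 /=.
    by case: (#|Cs|) ltS.
  have [g1 [inj1 in1 q1]] : matching S (nbr Rs S).
    apply: IH; first by rewrite -ltnS (leq_trans ltS).
    move=> T TS.
    suff -> : nbr (nbr Rs S) T = nbr Rs T by apply: HC; exact: subset_trans TS SCs.
    apply/setP => j; rewrite !inE.
    case: (j \in Rs) => //=; apply/idP/idP => [/andP [] //|H].
    rewrite H andbT; case/existsP: H => k /andP [kT qjk].
    by apply/existsP; exists k; rewrite (subsetP TS) // qjk.
  have [g2 [inj2 in2 q2]] : matching (Cs :\: S) (Rs :\: nbr Rs S).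
    apply: IH; first by rewrite -ltnS (leq_trans ltS2).
    move=> T TS.
    have TSd : [disjoint T & S].
      by rewrite -setI_eq0 -subset0; apply/subsetP => k; rewrite !inE => /andP [/(subsetP TS)]; rewrite !inE => /andP [/negbTE ->].
    have H1 := HC (T :|: S) ltac:(by rewrite subUset SCs andbT; apply: subset_trans TS (subsetDl _ _)).
    have E : nbr Rs (T :|: S) = (nbr (Rs :\: nbr Rs S) T) :|: nbr Rs S.
      apply/setP => j; rewrite !inE.
      case: (boolP (j \in Rs)) => jR //=; rewrite ?andbF ?andbT //.
      case: (boolP [exists k in S, q j k]) => hS; rewrite ?orbT ?orbF /=.
        by apply/existsP; case/existsP: hS => k /andP [kS qk]; exists k; rewrite inE kS orbT.
      apply/existsP/existsP => -[k /andP [kin qk]]; exists k; rewrite ?qk ?andbT //.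
        move: kin; rewrite inE => /orP [] // kS.
        by move/existsP: hS; case; exists k; rewrite kS.
      by rewrite inE kin.
    have D1 : [disjoint nbr (Rs :\: nbr Rs S) T & nbr Rs S].
      rewrite -setI_eq0 -subset0; apply/subsetP => j; rewrite !inE.
      by case/and3P => /andP [/andP [N _] _] a b; rewrite a b in N.
    move: H1; rewrite E !cardsU (disjoint_setI0 D1) (disjoint_setI0 TSd) !cards0 !subn0 => H1.
    by rewrite -(leq_add2r #|S|) (leq_trans H1) // leq_add2l.
  exists (fun k => if k \in S then g1 k else g2 k); split.
  + move=> k1 k2 k1C k2C /=.
    case: (boolP (k1 \in S)) => k1S; case: (boolP (k2 \in S)) => k2S.
    * exact: inj1.
    * move=> E; move: (in2 k2 ltac:(by rewrite inE k2S k2C)) (in1 k1 k1S).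
      by rewrite E => /setDP [_ /negP].
    * move=> E; move: (in2 k1 ltac:(by rewrite inE k1S k1C)) (in1 k2 k2S).
      by rewrite E => /setDP [_ /negP].
    * by apply: inj2; rewrite inE ?k1S ?k2S ?k1C ?k2C.
  + move=> k kC; case: ifP => kS.
      by apply: (subsetP (nbrS Rs S)); exact: in1.
    by have := in2 k ltac:(by rewrite inE kS kC); rewrite inE => /andP [].
  + move=> k kC; case: ifP => kS; first exact: q1.
    by apply: q2; rewrite inE kS kC.
- rewrite negb_exists => /forallP Hs.
  case: (set_0Vmem Cs) => [C0|[k0 k0C]].
    by exists (fun _ => w0); split => [k|k|k]; rewrite C0 inE.
  have := HC [set k0]; rewrite sub1set k0C cards1 => /(_ isT).
  rewrite card_gt0 => /set0Pn [j0 ]; rewrite inE => /andP [j0R /existsP [k]].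
  rewrite inE => /andP [/eqP -> qj0]; clear k.
  have [g [inj gin gq]] : matching (Cs :\ k0) (Rs :\ j0).
    apply: IH.
      by move: Csn; rewrite (cardsD1 k0) k0C add1n ltnS.
    move=> S SC.
    case: (eqVneq S set0) => [->|S0]; first by rewrite cards0.
    have := Hs S; rewrite (subset_trans SC (subsetDl _ _)) S0 /=.
    have SCs : S != Cs.
      apply: contraTneq (SC) => ->; apply/subsetPn; exists k0 => //.
      by rewrite !inE eqxx.
    rewrite SCs /= -ltnNge => lt.
    have : nbr Rs S \subset j0 |: nbr (Rs :\ j0) S.
      apply/subsetP => j; rewrite !inE; case: eqP => //= _.
    move/subset_leq_card; rewrite cardsU1 => le.
    by move: lt le; case: (j0 \notin nbr (Rs :\ j0) S) => /= lt le; lia.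
  exists (fun k => if k == k0 then j0 else g k); split.
  + move=> k1 k2 k1C k2C /=.
    case: eqP => [->|/eqP n1]; case: eqP => [->|/eqP n2] //.
    * move=> E; have := gin k2 ltac:(by rewrite !inE n2 k2C); rewrite -E !inE eqxx //.
    * move=> E; have := gin k1 ltac:(by rewrite !inE n1 k1C); rewrite E !inE eqxx //.
    * by apply: inj; rewrite !inE ?n1 ?n2 ?k1C ?k2C.
  + move=> k kC; case: eqP => // /eqP nk.
    by have := gin k ltac:(by rewrite !inE nk kC); rewrite !inE => /andP [].
  + move=> k kC; case: eqP => [->|/eqP nk] //.
    by apply: gq; rewrite !inE nk kC.
Qed.
End Hall.
Local Open Scope ring_scope.


Lemma kernel_ex (F : fieldType) (X Y : finType) (A : {set X}) (B : {set Y})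
    (h : X -> Y -> F) : (#|B| < #|A|)%N ->
  exists d : X -> F, [/\ exists x, d x != 0,
    (forall x, x \notin A -> d x = 0) &
    (forall y, y \in B -> \sum_(x in A) d x * h x y = 0)].
Proof.
move=> BA.
pose M : 'M[F]_(#|A|, #|B|) := \matrix_(i, j) h (enum_val i) (enum_val j).
have rk : (0 < \rank (kermx M))%N.
  rewrite mxrank_ker subn_gt0; exact: leq_ltn_trans (rank_leq_col M) BA.
have : kermx M != 0 by rewrite -mxrank_eq0 -lt0n.
case/matrix0Pn => i0 [k0 Hk].
pose v := row i0 (kermx M).
pose d x := \sum_(i < #|A|) (if enum_val i == x then v 0 i else 0).
have dE : forall i, d (enum_val i) = v 0 i.
  move=> i; rewrite /d (bigD1 i) //= eqxx big1 ?addr0 // => l lne.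
  by case: eqP => // /enum_val_inj E; rewrite E eqxx in lne.
exists d; split.
- by exists (enum_val k0); rewrite dE mxE.
- move=> x xA; rewrite /d big1 // => i _; case: eqP => // E.
  by move: xA; rewrite -E enum_valP.
- move=> y yB; rewrite big_enum_val.
  transitivity ((v *m M) 0 (enum_rank_in yB y)); last first.
    by rewrite /v -row_mul mulmx_ker row0 mxE.
  rewrite mxE; apply: eq_bigr => i _.
  by rewrite dE !mxE enum_rankK_in.
Qed.

Lemma card_supp (T : finType) (D : {set T}) :
  #|[set f : {ffun T -> bool} | [forall x, (x \notin D) ==> ~~ f x]]| = (2 ^ #|D|)%N.
Proof.
rewrite -(card_bool) -(card_pffun_on false D (@predT bool)).
apply: eq_card => f; rewrite inE; apply/forallP/pffun_onP => [H|[/supportP H _] x].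
  split; last by move=> b _.
  by apply/supportP => x xD; move: (H x); rewrite xD /= => /negbTE.
by apply/implyP => xD; rewrite H.
Qed.

Section NonIdent.
Variables (R : realType) (J K : nat) (Q : 'M[bool]_(J, K)).
Variables (theta : 'I_J -> att K -> R) (p : att K -> R) (S : {set 'I_K}).
Let NS := [set j | [exists k in S, Q j k]].
Hypothesis NSS : (#|NS| < #|S|)%N.
Hypothesis V : valid_params Q theta p.

Let AS := [set a : att K | [forall k, (k \notin S) ==> ~~ a k]].
Let RS := [set r : {ffun 'I_J -> bool} | [forall j, (j \notin NS) ==> ~~ r j]].
Let f (r : {ffun 'I_J -> bool}) j a := if r j then theta j a else 1 - theta j a.
Let h a r := \prod_(j in NS) f r j a.

Lemma sumh a : \sum_(r in RS) h a r = 1.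
Proof.
pose F (j : 'I_J) (b : bool) : R :=
  if j \in NS then (if b then theta j a else 1 - theta j a) else (if b then 0 else 1).
have : \prod_(j : 'I_J) \sum_(b : bool) F j b = \sum_(g : {ffun 'I_J -> bool}) \prod_j F j (g j).
  exact: bigA_distr_bigA.
have -> : \prod_(j : 'I_J) \sum_(b : bool) F j b = 1.
  apply: big1 => j _; rewrite big_bool /F; case: (j \in NS) => /=.
    by rewrite addrC subrK.
  by rewrite add0r.
move=> E; transitivity (\sum_(g : {ffun 'I_J -> bool}) \prod_j F j (g j)); last by rewrite -E.
rewrite [RHS](bigID (mem RS)) /= [X in _ = _ + X]big1 ?addr0.
  apply: eq_bigr => r rR; rewrite /h [RHS](bigID (mem NS)) /= [X in _ = _ * X]big1 ?mulr1.
    by apply: eq_bigr => j jN; rewrite /F /f jN.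
  move=> j jN; rewrite /F (negbTE jN).
  move: rR; rewrite inE => /forallP /(_ j); rewrite jN /= => /negbTE -> //.
move=> r; rewrite inE negb_forall => /existsP [j]; rewrite negb_imply negbK => /andP [jN rj].
by rewrite (bigD1 j) //= /F (negbTE jN) rj mul0r.
Qed.


Lemma theta_out j a : a \in AS -> j \notin NS -> theta j a = theta j (att0 K).
Proof.
case: V => _ _ _ Hod _ aA jN; apply: Hod; apply/ffunP => k; rewrite !ffunE.
case Qjk: (Q j k); rewrite ?andbF ?andbT //.
case: (boolP (k \in S)) => kS.
  by move: jN; rewrite inE negb_exists => /forallP /(_ k); rewrite kS Qjk.
by move: aA; rewrite inE => /forallP /(_ k); rewrite kS /= => /negbTE.
Qed.

Lemma kernel_d : exists d : att K -> R, [/\ exists x, d x != 0,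
    \sum_a d a = 0 &
    forall r, \sum_a d a * \prod_(j < J) f r j a = 0].
Proof.
have cS := card_supp S; have cNS := card_supp NS.
have [d [dnz dout dker]] := @kernel_ex R _ _ AS RS h
   ltac:(by rewrite /AS /RS cS cNS ltn_exp2l).
have sumA : forall F : att K -> R, \sum_a d a * F a = \sum_(a in AS) d a * F a.
  move=> F; rewrite (bigID (mem AS)) /= [X in _ + X]big1 ?addr0 //.
  by move=> a aA; rewrite dout // mul0r.
exists d; split => //.
  have := sumA (fun _ => 1); under eq_bigr do rewrite mulr1.
  move=> ->.
  transitivity (\sum_(a in AS) d a * \sum_(r in RS) h a r).
    by apply: eq_bigr => a _; rewrite sumh mulr1.
  under eq_bigr do rewrite mulr_sumr.
  rewrite exchange_big /=; apply: big1 => r rR; exact: dker.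
move=> r; rewrite sumA.
pose pr : {ffun 'I_J -> bool} := [ffun j => (j \in NS) && r j].
have prR : pr \in RS.
  by rewrite inE; apply/forallP => j; rewrite ffunE; apply/implyP => /negbTE ->.
pose Cr := \prod_(j < J | j \notin NS) f r j (att0 K).
transitivity (\sum_(a in AS) d a * h a pr * Cr).
  apply: eq_bigr => a aA; rewrite -mulrA; congr (_ * _).
  rewrite (bigID (mem NS)) /=; congr (_ * _).
    by apply: eq_bigr => j jN; rewrite /f ffunE jN.
  by apply: eq_bigr => j jN; rewrite /f theta_out.
by rewrite -mulr_suml dker // mul0r.
Qed.

End NonIdent.


Lemma nonident (R : realType) (J K : nat) (Q : 'M[bool]_(J, K))
    (theta : 'I_J -> att K -> R) (p : att K -> R) (S : {set 'I_K}) :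
  (#|[set j | [exists k in S, Q j k]]| < #|S|)%N -> valid_params Q theta p ->
  exists pb, [/\ valid_params Q theta pb,
     (forall r, resp_dist theta pb r = resp_dist theta p r) &
     ~ model_equiv Q Q theta theta p pb].
Proof.
move=> NSS V.
have [d [[x0 dx0] sd0 kd]] := kernel_d NSS V.
case: V => p0 psum th01 thod thmono.
pose Sg := \sum_a `|d a| / p a.
have Sge0 : 0 <= Sg by apply: sumr_ge0 => a _; rewrite divr_ge0 // ltW.
pose M := 1 + Sg.
have Mpos : 0 < M by rewrite /M; lra.
pose e0 := M^-1.
have e0pos : 0 < e0 by rewrite invr_gt0.
have Me0 : M * e0 = 1 by rewrite mulfV // gt_eqF.
have small : forall e, 0 < e -> e <= e0 -> forall a, 0 < p a + e * d a.
  move=> e ep ee a.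
  have h1 : `|d a| / p a <= Sg.
    by rewrite /Sg (bigD1 a) //= lerDl sumr_ge0 // => b _; rewrite divr_ge0 // ltW.
  have h2 : `|d a| <= p a * Sg.
    by rewrite -ler_pdivrMl // mulrC.
  have h3 : - `|d a| <= d a by apply: lerNnormlW.
  have pa := p0 a.
  have h4 : e * `|d a| <= e0 * (p a * Sg) by rewrite ler_pM // ?normr_ge0 ?ltW.
  have h5 : e0 * (p a * Sg) < p a.
    have eS : e0 * Sg = 1 - e0 by move: Me0; rewrite /M mulrDl mul1r => H; lra.
    rewrite mulrCA eS; nra.
  nra.
pose Sq := \sum_a d a ^+ 2.
have Sqpos : 0 < Sq.
  rewrite /Sq (bigD1 x0) //=.
  have A : 0 < d x0 ^+ 2 by rewrite lt_def sqrf_eq0 dx0 sqr_ge0.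
  have B : 0 <= \sum_(a | a != x0) d a ^+ 2 by apply: sumr_ge0 => a _; rewrite sqr_ge0.
  lra.
pose L := \sum_a p a * d a.
pose e := if 2 * L + e0 * Sq == 0 then e0 / 2 else e0.
have epos : 0 < e by rewrite /e; case: ifP => _ //; rewrite divr_gt0.
have ele : e <= e0 by rewrite /e; case: ifP => _ //; rewrite ler_pdivrMr //; lra.
have key : 2 * L + e * Sq != 0.
  rewrite /e; case: ifP => [/eqP H|/negbT //].
  apply/eqP => H2.
  have : e0 / 2 * Sq = e0 * Sq by lra.
  nra.
pose pb := fun a => p a + e * d a.
have V' : valid_params Q theta pb.
  split => //.
  - by move=> a; exact: small.
  - by rewrite big_split /= -mulr_sumr sd0 mulr0 addr0.
exists pb; split => //.
  move=> r; rewrite /resp_dist.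
  under eq_bigr do rewrite /pb mulrDl -mulrA.
  by rewrite big_split /= -mulr_sumr kd mulr0 addr0.
case=> s [_ Hp _].
have inj : injective (fun a : att K => [ffun k => a (s k)] : att K).
  move=> a b E; apply/ffunP => k.
  have := congr1 (fun g : att K => g ((s^-1)%g k)) E.
  by rewrite /= !ffunE permKV.
have E1 : \sum_a pb a ^+ 2 = \sum_a p a ^+ 2.
  rewrite (reindex_inj inj) /=; apply: eq_bigr => a _; by rewrite Hp.
have E2 : \sum_a pb a ^+ 2 = \sum_a p a ^+ 2 + e * (2 * L + e * Sq).
  transitivity (\sum_a (p a ^+ 2 + e * (2 * (p a * d a) + e * d a ^+ 2))).
    by apply: eq_bigr => a _; rewrite /pb; ring.
  by rewrite big_split /= -mulr_sumr big_split /= -!mulr_sumr.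
move: E2; rewrite E1 => /eqP; rewrite -subr_eq0 opprD addrA subrr add0r oppr_eq0 mulf_eq0.
by rewrite (negbTE key) orbF gt_eqF.
Qed.

From mathcomp Require Import all_classical all_reals all_analysis.
From mathcomp Require Import ereal lebesgue_measure measurable_realfun lebesgue_integral sequences measure.
Import numFieldNormedType.Exports.
Local Close Scope ring_scope.
Local Open Scope classical_set_scope.
Local Open Scope ring_scope.
Section Vol.
Variable R : realType.
Local Open Scope ereal_scope.

Definition ind1 (l h y : R) : R := if (l <= y <= h)%R then 1%R else 0%R.

Lemma ind1E l h y : ind1 l h y = \1_(`[l, h]%classic) y.
Proof. rewrite /ind1 indicE. set P := (y \in _). have -> : P = (l <= y <= h)%R. rewrite /P. by rewrite mem_setE in_itv. by case: (l <= y <= h)%R. Qed.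

Lemma oneD (a b C : R) (lo hi v : nat -> R) :
  (0 <= C)%R -> (a <= b)%R -> (forall n, lo n <= hi n)%R -> (forall n, 0 <= v n)%R ->
  (forall y, (a <= y <= b)%R -> C%:E <= \sum_(n <oo) (v n * ind1 (lo n) (hi n) y)%:E) ->
  (C * (b - a))%:E <= \sum_(n <oo) (v n * (hi n - lo n))%:E.
Proof.
move=> C0 ab lohi v0 H.
have S0 : forall n, 0 <= (v n * (hi n - lo n))%:E.
  by move=> n; rewrite lee_fin mulr_ge0 // subr_ge0.
have [ab'|ab'] := eqVneq a b.
  rewrite ab' subrr mulr0; exact: nneseries_ge0.
have ltab : (a < b)%R by rewrite lt_neqAle ab' ab.
pose D := `[a, b]%classic.
have mD : measurable D by exact: measurable_itv.
have mI : forall n, measurable (`[lo n, hi n]%classic : set R) by move=> n; exact: measurable_itv.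
have E1 : \int[lebesgue_measure]_(x in D) (cst C%:E) x = (C * (b - a))%:E.
  rewrite integral_cst // /D. have L := lebesgue_measure_itv (R:=R) `[a, b]. move: L => /= ->; rewrite ifT; last by rewrite lte_fin.
  by rewrite -EFinM.
rewrite -E1.
have f0 : forall n x, D x -> 0 <= (v n * \1_(`[lo n, hi n]%classic) x)%:E.
  by move=> n x _; rewrite lee_fin mulr_ge0.
have mf : forall n, measurable_fun D (EFin \o (fun x : R => (v n * \1_(`[lo n, hi n]%classic) x)%R)).
  move=> n; apply/measurable_EFinP; apply: measurable_funM => //.

apply: (@le_trans _ _ (\int[lebesgue_measure]_(x in D) \sum_(n <oo) (v n * \1_(`[lo n, hi n]%classic) x)%:E)).
  apply: ge0_le_integral => //.

  - apply: (@ge0_emeasurable_sum _ _ _ D (fun n x => (v n * \1_(`[lo n, hi n]%classic) x)%:E) xpredT).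
      by move=> k x Dx _; exact: f0.
    by move=> k _; exact: mf.
  - move=> x Dx /=. have := H x. rewrite /D /= in_itv /= in Dx. move=> /(_ Dx).
    by under eq_eseriesr do rewrite ind1E.
rewrite integral_nneseries //.
apply: lee_nneseries => [n _ _|n _].
  by apply: integral_ge0 => x Dx; exact: f0.
rewrite (@integralZl_indic _ _ _ lebesgue_measure D mD (fun=> `[lo n, hi n]%classic) (v n)); last 2 first.
- by move=> vn; exfalso; move: (v0 n); rewrite leNgt vn.
- exact: mI.
rewrite integral_indic //= EFinM lee_wpmul2l ?lee_fin //.
have L : lebesgue_measure (`[lo n, hi n]%classic : set R) = (if (lo n < hi n)%R then (hi n - lo n)%:E else 0)
  by rewrite lebesgue_measure_itv /= lte_fin.
apply: (@le_trans _ _ (lebesgue_measure (`[lo n, hi n]%classic : set R))).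
  apply: le_measure; rewrite ?inE //; exact: measurableI.
rewrite L; case: ifP => _ //; by rewrite lee_fin subr_ge0.
Qed.

Definition indB (T : finType) (D : {set T}) (l h x : T -> R) : R :=
  \prod_(i in D) ind1 (l i) (h i) (x i).
Definition vol (T : finType) (D : {set T}) (l h : T -> R) : R :=
  \prod_(i in D) (h i - l i).

Lemma ind1_ge0 l h y : (0 <= ind1 l h y)%R.
Proof. by rewrite /ind1; case: ifP. Qed.

Lemma vol_ge0 (T : finType) (D : {set T}) (l h : T -> R) :
  (forall i, l i <= h i)%R -> (0 <= vol D l h)%R.
Proof. by move=> lh; apply: prodr_ge0 => i _; rewrite subr_ge0. Qed.

Lemma eser (f g : nat -> R) : (forall n, f n = g n) ->
  \sum_(n <oo) (f n)%:E = \sum_(n <oo) (g n)%:E.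
Proof. by move=> fg; apply: eq_eseriesr => n _; rewrite fg. Qed.

Lemma boxvol (T : finType) (a b : T -> R) (lo hi : nat -> T -> R) :
  (forall i, a i <= b i)%R -> (forall n i, lo n i <= hi n i)%R ->
  forall (D : {set T}) (w : nat -> R), (forall n, 0 <= w n)%R ->
  (forall x, (forall i, i \in D -> a i <= x i <= b i)%R ->
     1 <= \sum_(n <oo) (w n * indB D (lo n) (hi n) x)%:E) ->
  (vol D a b)%:E <= \sum_(n <oo) (w n * vol D (lo n) (hi n))%:E.
Proof.
move=> ab lohi D; move Dk: #|D| => k; elim: k D Dk => [|k IH] D Dk w w0 H.
  move/eqP: Dk; rewrite cards_eq0 => /eqP D0; subst D.
  rewrite /vol big_set0.
  under eq_eseriesr do rewrite big_set0 mulr1.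
  have H1 := H (fun _ => 0%R) (fun i => ltac:(by rewrite inE)).
  rewrite (@eq_eseriesr _ (fun n => (w n * indB finset.set0 (lo n) (hi n) (fun _ => 0%R))%:E) (fun n => (w n)%:E)) in H1 => //.
  by move=> n _; rewrite /indB big_set0 mulr1.
have [i0 Hi0] : exists i0, i0 \in D.
  by apply/set0Pn; rewrite -card_gt0 Dk.
have Dk' : #|D :\ i0| = k.
  by move: Dk; rewrite (cardsD1 i0) Hi0 add1n => -[].
have volE : forall l h : T -> R, vol D l h = ((h i0 - l i0) * vol (D :\ i0) l h)%R.
  by move=> l h; rewrite /vol (big_setD1 i0 Hi0).
have indE : forall l h x, indB D l h x = (ind1 (l i0) (h i0) (x i0) * indB (D :\ i0) l h x)%R.
  by move=> l h x; rewrite /indB (big_setD1 i0 Hi0).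
rewrite volE.
under eq_eseriesr do rewrite volE.
have := @oneD (a i0) (b i0) (vol (D :\ i0) a b) (fun n => lo n i0) (fun n => hi n i0)
   (fun n => w n * vol (D :\ i0) (lo n) (hi n))%R.
move=> /(_ (vol_ge0 _ ab) (ab i0) (fun n => lohi n i0)).
move=> /(_ (fun n => mulr_ge0 (w0 n) (vol_ge0 _ (lohi n)))).
rewrite mulrC.
rewrite (@eser _ (fun n => (w n * ((hi n i0 - lo n i0) * vol (D :\ i0) (lo n) (hi n))))%R); last first.
  by move=> n; rewrite -mulrA (mulrC (vol _ _ _)).
apply => y yab.
have := IH (D :\ i0) Dk' (fun n => w n * ind1 (lo n i0) (hi n i0) y)%R.
move=> /(_ (fun n => mulr_ge0 (w0 n) (ind1_ge0 _ _ _))).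
rewrite (@eser _ (fun n => (w n * vol (D :\ i0) (lo n) (hi n) * ind1 (lo n i0) (hi n i0) y))%R); last first.
  by move=> n; rewrite mulrAC.
apply => x xab.
pose x2 := fun i => if i == i0 then y else x i.
have := H x2.
rewrite (@eser _ (fun n => (w n * ind1 (lo n i0) (hi n i0) y * indB (D :\ i0) (lo n) (hi n) x))%R); last first.
  move=> n; rewrite indE mulrA /x2 eqxx; congr (_ * _)%R.
  rewrite /indB; apply: eq_bigr => i; rewrite !inE => /andP [/negbTE -> _] //.
apply => i iD; rewrite /x2; case: eqP => [->|/eqP ne] //.
by apply: xab; rewrite !inE ne.
Qed.

Lemma ser_le (u : nat -> R) (B : R) : (forall n, 0 <= u n)%R ->
  (forall m, \sum_(n < m) u n <= B)%R -> \sum_(n <oo) (u n)%:E <= B%:E.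
Proof.
move=> u0 H.
have := @ereal_nondecreasing_series R (fun n => (u n)%:E) xpredT 0 (fun n _ _ => ltac:(by rewrite lee_fin)).
move/ereal_nondecreasing_cvgn/cvg_lim => -> //.
apply: ge_ereal_sup => _ [k _ <-] /=.
by rewrite sumEFin lee_fin big_mkord; exact: H.
Qed.

Lemma ser_ge (u : nat -> R) n : (forall n, 0 <= u n)%R ->
  (u n)%:E <= \sum_(n <oo) (u n)%:E.
Proof.
move=> u0; apply: (le_trans _ (nneseries_lim_ge (n.+1) _)); last first.
  by move=> k _ _; rewrite lee_fin.
rewrite big_nat_recr //= leeDr //; apply: sume_ge0 => k _; by rewrite lee_fin.
Qed.
End Vol.

Local Close Scope classical_set_scope.

Lemma succeqE K (a q : att K) : succeq a q = (odot a q == q).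
Proof.
apply/forallP/eqP => [H|E k].
  apply/ffunP => k; rewrite ffunE; have := H k; case: (q k); rewrite ?andbT ?andbF //.
have := congr1 (fun g : att K => g k) E; rewrite /= ffunE.
by case: (q k); case: (a k).
Qed.

Lemma succeq_odot K (a q : att K) : succeq q (odot a q).
Proof. by apply/forallP => k; rewrite ffunE; apply/implyP => /andP []. Qed.

Lemma complete_of_hall J K (Q : 'M[bool]_(J, K)) :
  (forall S : {set 'I_K}, (#|S| <= #|[set j | [exists k in S, Q j k]]|)%N) ->
  generically_complete Q.
Proof.
case: K Q => [|K] Q H.
  exists (fun i : 'I_0 => ltac:(exfalso; case: i => m; by rewrite ltn0)).
  by split; [move=> [] | exists 1%g, 1%g; case].
have Jpos : (0 < J)%N.
  have := H [set: 'I_K.+1]; rewrite cardsT card_ord => le.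
  by have := leq_trans le (max_card _); rewrite card_ord; apply: leq_trans.
have [g [inj gin gq]] := @hall_ind _ _ (fun j k => Q j k) (Ordinal Jpos) #|[set: 'I_K.+1]|
   [set: 'I_K.+1] [set: 'I_J] (leqnn _) (fun S _ => ltac:(
     rewrite (_ : nbr _ _ _ = [set j | [exists k in S, Q j k]]); [exact: H | apply/finset.setP => j; by rewrite !inE])).
exists g; split; first by move=> x y; apply: inj; rewrite inE.
by exists 1%g, 1%g => i; rewrite !perm1; apply: gq; rewrite inE.
Qed.

Theorem theorem5 (R : realType) (J K : nat) (Q : 'M[bool]_(J, K)) :
  jointly_generically_identifiable R Q -> generically_complete Q.
Proof.
move=> JGI.
case: (boolP [exists S : {set 'I_K}, (#|[set j | [exists k in S, Q j k]]| < #|S|)%N]); last first.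
  rewrite negb_exists => /forallP H; apply: complete_of_hall => S.
  by rewrite leqNgt; exact: H.
case/existsP => S NSS; exfalso.
pose Nn : R := #|att K|%:R.
have Npos : 0 < Nn by rewrite ltr0n; apply/card_gt0P; exists (att0 K).
pose u : R := (4 * Nn)^-1.
have upos : 0 < u by rewrite invr_gt0 mulr_gt0.
have uN : 2 * u * Nn = 1 / 2 by rewrite /u; field; rewrite gt_eqF.
pose aa : Defs.coord J K -> R := fun i => match i with
  | inl (j, a) => if a == qrow Q j then 3 / 4 else 0 | inr _ => u end.
pose bb : Defs.coord J K -> R := fun i => match i with
  | inl (j, a) => if a == qrow Q j then 1 else 1 / 4 | inr _ => 2 * u end.
have ab : forall i, aa i < bb i.
  by case=> [[j a]|a] /=; [case: ifP => _; lra | lra].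
pose Dset : {set Defs.coord J K} := [set i | coord_dom Q i].
pose V := vol Dset aa bb.
have Vpos : 0 < V by apply: prodr_gt0 => i _; rewrite subr_gt0.
have inbox : forall x, (forall i, i \in Dset -> aa i <= x i <= bb i) ->
    valid_params Q (theta_of Q x) (p_of x).
  move=> x xb.
  have thb : forall j a, [/\ 0 <= theta_of Q x j a <= 1,
      (odot a (qrow Q j) == qrow Q j) -> 3 / 4 <= theta_of Q x j a &
      ~~ (odot a (qrow Q j) == qrow Q j) -> theta_of Q x j a <= 1 / 4].
    move=> j a; have := xb (inl (j, odot a (qrow Q j))).
    rewrite inE /= succeq_odot /theta_of => /(_ isT).
    by case: eqP => _ /andP [l h]; split => //; apply/andP; split; lra.
  have pbd : forall b, b != att0 K -> u <= x (inr b) <= 2 * u.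
    by move=> b bn; have := xb (inr b); rewrite inE /= bn => /(_ isT).
  split.
  - move=> a; rewrite /p_of; case: ifP => [_|/negbT an0]; last first.
      by case/andP: (pbd a an0) => l _; exact: lt_le_trans upos l.
    have h1 : \sum_(b | b != att0 K) x (inr b) <= \sum_(b | b != att0 K) 2 * u.
      by apply: ler_sum => b bn; case/andP: (pbd b bn).
    have h2 : \sum_(b | b != att0 K) (2 * u) <= \sum_(b : att K) (2 * u).
      by rewrite [X in _ <= X](bigD1 (att0 K)) //= lerDr; lra.
    have h3 : \sum_(b : att K) (2 * u) = 1 / 2.
      by rewrite sumr_const -[_ *+ #|_|]mulr_natr -uN.
    lra.
  - rewrite (bigD1 (att0 K)) //= {1}/p_of eqxx.
    rewrite [X in _ + X](eq_bigr (fun b => x (inr b))) ?subrK // => b bn.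
    by rewrite /p_of (negbTE bn).
  - by move=> j a; case: (thb j a).
  - by move=> j a a' E; rewrite /theta_of E.
  - move=> j a a'; rewrite !succeqE => h1 h2.
    case: (thb j a) => _ /(_ h1) l _; case: (thb j a') => _ _ /(_ h2) l'.
    lra.
have [lo [hi [lohi psum cover]]] := JGI (V / 2) ltac:(by rewrite divr_gt0).
have := @boxvol R _ aa bb lo hi (fun i => ltW (ab i)) lohi Dset (fun _ => 1) (fun _ => ler01).
have volE : forall n, vol Dset (lo n) (hi n) = \prod_(i | coord_dom Q i) (hi n i - lo n i).
  by move=> n; apply: eq_bigl => i; rewrite inE.
move=> /(_ _) H.
have H2 : (V%:E <= \sum_(n <oo) (1 * vol Dset (lo n) (hi n))%:E)%E.
  apply: H => x xb.
  have [pb [Vb Eb NEb]] := nonident NSS (inbox x xb).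
  have [n Hn] := cover x (conj (inbox x xb) (ex_intro _ Q (ex_intro _ (theta_of Q x)
                   (ex_intro _ pb (And3 Vb Eb NEb))))).
  apply: le_trans (ser_ge n _); last first.
    by move=> k; rewrite mulr_ge0 // prodr_ge0 // => i _; exact: ind1_ge0.
  rewrite lee_fin mul1r /indB big1 // => i; rewrite inE => di.
  by rewrite /ind1 Hn.
have H3 : (\sum_(n <oo) (1 * vol Dset (lo n) (hi n))%:E <= (V / 2)%:E)%E.
  apply: ser_le => [n|m]; first by rewrite mul1r vol_ge0.
  by under eq_bigr do rewrite mul1r volE.
have := le_trans H2 H3; rewrite lee_fin; lra.
Qed.
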